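(* Let $(x^k,\lambda^k)_{k\ge0}$ be generated by the proximal ADMM applied to (P). Suppose Assumption (A2) holds on a compact set $S$ with constants $M_f,L_f,C_\varphi,M_\varphi,L_\varphi$, and that $x^k,x^{k+1}\in S$ for some $k\ge1$. Then for every $i=0,\dots,n-1$, $$\|\lambda_i^{k+1}-\lambda_i^k\|^2\le\sum_{j=i}^{n-1}2(n-i)C_{j,i}^2\|x_{j+1}^{k+1}-x_{j+1}^k\|^2+\sum_{j=i}^{n-1}2(n-i)\tilde C_{j,i}^2\|x_{j+1}^k-x_{j+1}^{k-1}\|^2,$$ where for $j>i$ $$C_{j,i}=\frac{M_\varphi^{j-i}-M_\varphi^{n-i-1}}{1-M_\varphi}M_fL_\varphi+M_\varphi^{j-i}L_f+(2j-2i+1)\frac{M_\varphi^{j-i}}{\eta_{j+1}}+(2j-2i-1)\rho_jM_\varphi^{j-i},\qquad \tilde C_{j,i}=\frac{M_\varphi^{j-i}}{\eta_{j+1}}+\rho_jM_\varphi^{j-i},$$ and for $j=i$ $$C_{i,i}=\frac{1-M_\varphi^{n-i-1}}{1-M_\varphi}M_fL_\varphi+L_f+\frac{1}{\eta_{i+1}},\qquad \tilde C_{i,i}=\frac{1}{\eta_{i+1}}.$$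
   Context: Let $n,d\ge1$, and let $f_0,\dots,f_n:\mathbb{R}^d\to\mathbb{R}$ and $\varphi:\mathbb{R}^d\to\mathbb{R}^d$ be continuously differentiable; $\nabla\varphi$ denotes the Jacobian matrix and $\|\cdot\|$ the Euclidean norm / induced matrix 2-norm. Problem (P): minimize $\sum_{i=0}^n f_i(x_i)$ over $x=(x_0,\dots,x_n)\in(\mathbb{R}^d)^{n+1}$ subject to $x_{j+1}=\varphi(x_j)$, $j=0,\dots,n-1$. For penalty parameters $\rho_0,\dots,\rho_{n-1}>0$ and $\lambda=(\lambda_0,\dots,\lambda_{n-1})\in(\mathbb{R}^d)^n$, the augmented Lagrangian is $L_\rho(x,\lambda)=\sum_{i=0}^n f_i(x_i)+\sum_{i=0}^{n-1}\big(\langle\lambda_i,x_{i+1}-\varphi(x_i)\rangle+\frac{\rho_i}{2}\|x_{i+1}-\varphi(x_i)\|^2\big)$. Proximal ADMM: given $\eta_0,\dots,\eta_n>0$ and an initial point $(x^0,\lambda^0)$, for $k=0,1,\dots$, for $i=0,1,\dots,n$ in this order, $x_i^{k+1}$ is a (global) minimizer over $x_i$ of $L_\rho(x_0^{k+1},\dots,x_{i-1}^{k+1},x_i,x_{i+1}^k,\dots,x_n^k,\lambda^k)+\frac{1}{2\eta_i}\|x_i-x_i^k\|^2$ (assumed to exist), then $\lambda_j^{k+1}=\lambda_j^k+\rho_j(x_{j+1}^{k+1}-\varphi(x_j^{k+1}))$, $j=0,\dots,n-1$. Assumption (A2) on a compact set $S\subset(\mathbb{R}^d)^{n+1}$: there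 are constants $M_f,L_f,C_\varphi,M_\varphi,L_\varphi>0$ such that for all $x=(x_0,\dots,x_n),y=(y_0,\dots,y_n)\in S$ and all $i=0,\dots,n$: $\|\nabla f_i(x_i)\|\le M_f$, $\|\nabla f_i(x_i)-\nabla f_i(y_i)\|\le L_f\|x_i-y_i\|$, $\|\varphi(x_i)\|\le C_\varphi$, $\|\nabla\varphi(x_i)\|\le M_\varphi$, $\|\nabla\varphi(x_i)-\nabla\varphi(y_i)\|\le L_\varphi\|x_i-y_i\|$. Quotients of the form $\frac{M_\varphi^a-M_\varphi^b}{1-M_\varphi}$ ($a\le b$) denote $\sum_{l=a}^{b-1}M_\varphi^l$ (in particular when $M_\varphi=1$). *)

(* Defs.v *)
From HB Require Import structures.
From mathcomp Require Import all_boot all_order all_algebra.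
From mathcomp Require Import all_classical all_reals all_analysis.
Set Implicit Arguments.
Unset Strict Implicit.
Unset Printing Implicit Defensive.
Import Order.TTheory GRing.Theory Num.Theory numFieldNormedType.Exports.
Local Open Scope classical_set_scope.
Local Open Scope ring_scope.

Section ADMM.
Variables (R : realType) (d : nat).

Definition dotp (u v : 'cV[R]_d) : R := \sum_(a < d) u a 0 * v a 0.
Definition enorm (u : 'cV[R]_d) : R := Num.sqrt (dotp u u).

Definition mnorm (A : 'M[R]_d) : R :=
  sup [set enorm (A *m v) | v in [set v : 'cV[R]_d | enorm v <= 1]].

(** A point (x_0,...,x_n) of (R^d)^(n+1), given as a nat-indexed family of
    which only the indices 0..n matter, packed as the d x (n+1) matrix
    whose i-th column is x_i. *)
Definition pack (n : nat) (x : nat -> 'cV[R]_d) : 'M[R]_(d, n.+1) :=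
  \matrix_(a < d, i < n.+1) x i a 0.

Definition auglag (n : nat) (f : nat -> 'cV[R]_d -> R) (phi : 'cV[R]_d -> 'cV[R]_d)
    (rho : nat -> R) (x lam : nat -> 'cV[R]_d) : R :=
  \sum_(i < n.+1) f i (x i)
  + \sum_(i < n) (dotp (lam i) (x i.+1 - phi (x i))
                  + rho i / 2 * enorm (x i.+1 - phi (x i)) ^+ 2).

Definition gs_point (x : nat -> nat -> 'cV[R]_d) (k i : nat) (y : 'cV[R]_d)
    : nat -> 'cV[R]_d :=
  fun j => if (j < i)%N then x k.+1 j else if j == i then y else x k j.

Definition prox_admm (n : nat) (f : nat -> 'cV[R]_d -> R)
    (phi : 'cV[R]_d -> 'cV[R]_d) (rho eta : nat -> R)
    (x lam : nat -> nat -> 'cV[R]_d) : Prop :=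
  forall k : nat,
    (forall i : nat, (i <= n)%N -> forall y : 'cV[R]_d,
        auglag n f phi rho (gs_point x k i (x k.+1 i)) (lam k)
          + 1 / (2 * eta i) * enorm (x k.+1 i - x k i) ^+ 2
        <= auglag n f phi rho (gs_point x k i y) (lam k)
          + 1 / (2 * eta i) * enorm (y - x k i) ^+ 2)
    /\ (forall j : nat, (j < n)%N ->
          lam k.+1 j = lam k j + rho j *: (x k.+1 j.+1 - phi (x k.+1 j))).

(** Assumption (A2) on S (a set of points of (R^d)^(n+1), packed as matrices
    whose i-th column is the i-th block). gradf i is the gradient of f_i and
    Jphi the Jacobian matrix of phi. *)
Definition A2 (n : nat) (S : set 'M[R]_(d, n.+1))
    (gradf : nat -> 'cV[R]_d -> 'cV[R]_d) (phi : 'cV[R]_d -> 'cV[R]_d)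
    (Jphi : 'cV[R]_d -> 'M[R]_d) (Mf Lf Cphi Mphi Lphi : R) : Prop :=
  ([/\ 0 < Mf, 0 < Lf, 0 < Cphi, 0 < Mphi & 0 < Lphi] /\
   forall X Y : 'M[R]_(d, n.+1), S X -> S Y -> forall i : 'I_n.+1,
     [/\ enorm (gradf i (col i X)) <= Mf,
         enorm (gradf i (col i X) - gradf i (col i Y))
           <= Lf * enorm (col i X - col i Y),
         enorm (phi (col i X)) <= Cphi,
         mnorm (Jphi (col i X)) <= Mphi &
         mnorm (Jphi (col i X) - Jphi (col i Y))
           <= Lphi * enorm (col i X - col i Y)]).

(** (M^a - M^b)/(1 - M) for a <= b, read as sum_{l=a}^{b-1} M^l. *)
Definition gsum (M : R) (a b : nat) : R := \sum_(a <= l < b) M ^+ l.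

Definition Cji (n : nat) (Mf Lf Mphi Lphi : R) (rho eta : nat -> R) (j i : nat) : R :=
  if j == i then
    gsum Mphi 0 (n - i - 1) * Mf * Lphi + Lf + 1 / eta i.+1
  else
    gsum Mphi (j - i) (n - i - 1) * Mf * Lphi + Mphi ^+ (j - i) * Lf
    + (2 * (j - i) + 1)%:R * (Mphi ^+ (j - i) / eta j.+1)
    + (2 * (j - i) - 1)%:R * rho j * Mphi ^+ (j - i).

Definition Ctji (Mphi : R) (rho eta : nat -> R) (j i : nat) : R :=
  if j == i then 1 / eta i.+1
  else Mphi ^+ (j - i) / eta j.+1 + rho j * Mphi ^+ (j - i).

End ADMM.

(* Main.v *)
Require Import Defs.
From HB Require Import structures.
From mathcomp Require Import all_boot all_order all_algebra.
From mathcomp Require Import all_classical all_reals all_analysis.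
From mathcomp Require Import ring lra zify.
From Stdlib Require Import Lia.
Import Order.TTheory GRing.Theory Num.Theory numFieldNormedType.Exports.
Local Open Scope classical_set_scope.
Local Open Scope ring_scope.
Section LinAlg.
Context {R : realType} {d : nat}.
Implicit Types (u v w : 'cV[R]_d) (A B : 'M[R]_d).

Lemma dotpE u v : dotp u v = (u^T *m v) 0 0.
Proof. by rewrite /dotp !mxE; apply: eq_bigr => a _; rewrite mxE. Qed.

Lemma dotpC u v : dotp u v = dotp v u.
Proof. by rewrite /dotp; apply: eq_bigr => a _; rewrite mulrC. Qed.

Lemma dotpDr u v w : dotp u (v + w) = dotp u v + dotp u w.
Proof. by rewrite !dotpE mulmxDr mxE. Qed.

Lemma dotpDl u v w : dotp (v + w) u = dotp v u + dotp w u.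
Proof. by rewrite dotpC dotpDr !(dotpC u). Qed.

Lemma dotpZr c u v : dotp u (c *: v) = c * dotp u v.
Proof. by rewrite !dotpE -scalemxAr mxE. Qed.

Lemma dotpZl c u v : dotp (c *: v) u = c * dotp v u.
Proof. by rewrite dotpC dotpZr dotpC. Qed.

Lemma dotpNr u v : dotp u (- v) = - dotp u v.
Proof. by rewrite -scaleN1r dotpZr mulN1r. Qed.

Lemma dotpNl u v : dotp (- v) u = - dotp v u.
Proof. by rewrite dotpC dotpNr dotpC. Qed.

Lemma dotpBr u v w : dotp u (v - w) = dotp u v - dotp u w.
Proof. by rewrite dotpDr dotpNr. Qed.

Lemma dotpBl u v w : dotp (v - w) u = dotp v u - dotp w u.
Proof. by rewrite dotpDl dotpNl. Qed.

Lemma dotp0r u : dotp u 0 = 0.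
Proof. by rewrite /dotp big1 // => a _; rewrite mxE mulr0. Qed.

Lemma dotp0l u : dotp 0 u = 0.
Proof. by rewrite dotpC dotp0r. Qed.

Lemma dotp_ge0 u : 0 <= dotp u u.
Proof. by apply: sumr_ge0 => a _; rewrite -expr2 sqr_ge0. Qed.

Lemma dotp_eq0 u : dotp u u = 0 -> u = 0.
Proof.
move=> h; apply/matrixP => a b; rewrite (ord1 b) mxE.
have := @psumr_eq0P _ _ xpredT (fun a : 'I_d => u a 0 * u a 0).
move=> /(_ (fun a _ => ltac:(by rewrite -expr2 sqr_ge0)) h a isT) /eqP.
by rewrite -expr2 sqrf_eq0 => /eqP.
Qed.

Lemma dotp_trmx A u v : dotp (A^T *m u) v = dotp u (A *m v).
Proof. by rewrite !dotpE trmx_mul trmxK mulmxA. Qed.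

Lemma enorm_ge0 u : 0 <= enorm u.
Proof. exact: sqrtr_ge0. Qed.

Lemma enorm_sq u : enorm u ^+ 2 = dotp u u.
Proof. by rewrite /enorm sqr_sqrtr // dotp_ge0. Qed.

Lemma enorm0 : enorm (0 : 'cV[R]_d) = 0.
Proof. by rewrite /enorm dotp0r sqrtr0. Qed.

Lemma enorm_eq0 u : enorm u = 0 -> u = 0.
Proof. by move=> h; apply: dotp_eq0; rewrite -enorm_sq h expr0n. Qed.

Lemma enormZ c u : enorm (c *: u) = `|c| * enorm u.
Proof.
rewrite /enorm dotpZl dotpZr mulrA -expr2 sqrtrM ?sqr_ge0 //.
by rewrite sqrtr_sqr.
Qed.

Lemma enormN u : enorm (- u) = enorm u.
Proof. by rewrite -scaleN1r enormZ normrN normr1 mul1r. Qed.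

Lemma enormB u v : enorm (u - v) = enorm (v - u).
Proof. by rewrite -enormN opprB. Qed.

Lemma dotp_young u v s (s0 : 0 < s) : 2 * dotp u v <= s * dotp u u + s^-1 * dotp v v.
Proof.
have := dotp_ge0 (s *: u - v).
rewrite !dotpBl !dotpBr !dotpZl !dotpZr (dotpC v u) => h.
have e : s * dotp u u + s^-1 * dotp v v - 2 * dotp u v
   = s^-1 * (s * (s * dotp u u) - s * dotp u v - (s * dotp u v - dotp v v)).
  by field; rewrite gt_eqF.
rewrite -subr_ge0 e mulr_ge0 // invr_ge0 ltW //.
Qed.

Lemma cauchy_schwarz u v : dotp u v <= enorm u * enorm v.
Proof.
have [u0|] := eqVneq (enorm u) 0.
  by rewrite (enorm_eq0 _ u0) dotp0l enorm0 mul0r.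
have [v0|] := eqVneq (enorm v) 0.
  by rewrite (enorm_eq0 _ v0) dotp0r enorm0 mulr0.
move=> nv nu.
have gu : 0 < enorm u by rewrite lt_def nu enorm_ge0.
have gv : 0 < enorm v by rewrite lt_def nv enorm_ge0.
have := dotp_young u v _ (divr_gt0 gv gu).
rewrite -!enorm_sq invf_div.
have -> : enorm v / enorm u * enorm u ^+ 2 + enorm u / enorm v * enorm v ^+ 2
   = 2 * (enorm u * enorm v) by field; apply/andP; split; rewrite gt_eqF.
by rewrite ler_pM2l.
Qed.

Lemma cauchy_schwarz_abs u v : `|dotp u v| <= enorm u * enorm v.
Proof.
rewrite ler_norml cauchy_schwarz andbT lerNl -dotpNl.
by rewrite (le_trans (cauchy_schwarz _ _)) // enormN.
Qed.

Lemma enormD u v : enorm (u + v) <= enorm u + enorm v.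
Proof.
rewrite -(ler_pXn2r (n:=2)) // ?nnegrE ?addr_ge0 ?enorm_ge0 //.
rewrite enorm_sq dotpDl !dotpDr (dotpC v u) sqrrD -!enorm_sq.
have := cauchy_schwarz u v; lra.
Qed.

Lemma enormDB u v : enorm (u - v) <= enorm u + enorm v.
Proof. by rewrite (le_trans (enormD _ _)) // enormN. Qed.

Lemma enorm_mxbound A : exists K, forall w, enorm w <= 1 -> enorm (A *m w) <= K.
Proof.
exists (Num.sqrt (\sum_(a < d) dotp (row a A)^T (row a A)^T)) => w hw.
rewrite /enorm ler_sqrt; last by apply: sumr_ge0 => a _; apply: dotp_ge0.
rewrite /dotp; apply: ler_sum => a _.
have -> : (A *m w) a 0 = dotp (row a A)^T w.
  by rewrite /dotp mxE; apply: eq_bigr => b _; rewrite !mxE.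
rewrite -expr2; have := cauchy_schwarz_abs (row a A)^T w.
move=> h; have h2 : `|dotp (row a A)^T w| ^+ 2 <= (enorm (row a A)^T * enorm w) ^+ 2.
  by rewrite ler_pXn2r // nnegrE ?normr_ge0 ?mulr_ge0 ?enorm_ge0.
rewrite real_normK ?num_real // in h2; rewrite (le_trans h2) //.
rewrite exprMn enorm_sq -[X in _ <= X]mulr1 ler_wpM2l ?dotp_ge0 //.
have : enorm w ^+ 2 <= 1 ^+ 2 by rewrite ler_pXn2r // nnegrE ?ler01 ?enorm_ge0.
by rewrite expr1n.
Qed.

Lemma mnorm_ub A w : enorm w <= 1 -> enorm (A *m w) <= mnorm A.
Proof.
move=> hw; apply: ub_le_sup; last by exists w.
have [K hK] := enorm_mxbound A; exists K => y [v hv <-]; exact: hK.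
Qed.

Lemma mnorm_ge0 A : 0 <= mnorm A.
Proof. by rewrite -enorm0 -(mulmx0 _ A) mnorm_ub // enorm0 ler01. Qed.

Lemma mnorm_bound A w : enorm (A *m w) <= mnorm A * enorm w.
Proof.
have [w0|nw] := eqVneq (enorm w) 0.
  by rewrite (enorm_eq0 _ w0) mulmx0 enorm0 mulr0.
have gw : 0 < enorm w by rewrite lt_def nw enorm_ge0.
have h := mnorm_ub A ((enorm w)^-1 *: w).
rewrite enormZ -scalemxAr enormZ ger0_norm ?invr_ge0 ?enorm_ge0 // in h.
rewrite mulVf // in h; have := h (lexx _).
by rewrite ler_pdivrMl // mulrC.
Qed.

Lemma mnorm_boundT A w : enorm (A^T *m w) <= mnorm A * enorm w.
Proof.
have [w0|nw] := eqVneq (enorm (A^T *m w)) 0.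
  by rewrite w0 mulr_ge0 ?mnorm_ge0 ?enorm_ge0.
have gw : 0 < enorm (A^T *m w) by rewrite lt_def nw enorm_ge0.
have h : enorm (A^T *m w) ^+ 2 <= enorm (A^T *m w) * (mnorm A * enorm w).
  rewrite enorm_sq dotp_trmx (le_trans (cauchy_schwarz _ _)) //.
  have := mnorm_bound A (A^T *m w); have := enorm_ge0 w; have := enorm_ge0 (A^T *m w).
  have := mnorm_ge0 A; nra.
by rewrite expr2 ler_pM2l in h.
Qed.

Lemma mnormB A B : mnorm (A - B) <= mnorm A + mnorm B.
Proof.
apply: ge_sup; first by exists (enorm ((A - B) *m 0)), 0 => //; rewrite /= enorm0 ler01.
move=> y [v hv <-]; rewrite mulmxBl (le_trans (enormDB _ _)) //.
by rewrite lerD // mnorm_ub.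
Qed.

End LinAlg.
Section Deriv.
Context {R : realType} {d : nat}.
Local Notation V := 'cV[R]_d.

Lemma is_derive_fun (W : normedModType R) (F G : V -> W) z w D :
  (forall y, F y = G y) -> is_derive z w G D -> is_derive z w F D.
Proof. by move=> e; rewrite (_ : F = G) //; apply/funext. Qed.

Lemma is_derive_coord (m p : nat) (A : V -> 'M[R]_(m, p)) z w dA i j :
  is_derive z w A dA -> is_derive z w (fun y => A y i j) (dA i j).
Proof.
move=> [dv dval]; apply: DeriveDef.
  by move: dv => /derivable_mxP; apply.
by rewrite -dval derive_mx // mxE.
Qed.

Lemma is_derive_dotp (A B : V -> V) z w dA dB :
  is_derive z w A dA -> is_derive z w B dB ->
  is_derive z w (fun y => dotp (A y) (B y)) (dotp (A z) dB + dotp dA (B z)).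
Proof.
move=> hA hB.
apply: (@is_derive_fun _ _ (\sum_(a < d) ((fun y => A y a 0) * (fun y => B y a 0)))).
  by move=> y; rewrite /dotp fct_sumE.
apply: is_derive_eq.
  apply: is_derive_sum => a; apply: is_deriveM; exact: is_derive_coord.
rewrite /dotp -big_split /=; apply: eq_bigr => a _.
by rewrite /GRing.scale /= mulrC [_ * B z a 0]mulrC.
Qed.

Lemma is_derive_diff (W : normedModType R) (F : V -> W) z w :
  differentiable F z -> is_derive z w F ('d F z w).
Proof.
move=> df; apply: DeriveDef; first exact: diff_derivable.
exact: deriveE.
Qed.

Lemma fermat (F : V -> R) z w D :
  (forall y, F z <= F y) -> is_derive z w F D -> D = 0.
Proof.
move=> cmin [fdrvbl <-].
apply/eqP; rewrite eq_le; apply/andP; split.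
  rewrite /derive cvg_at_leftE //.
  apply: limr_le.
    rewrite -(cvg_at_leftE (fun h : R => h^-1 *: ((F \o shift z) _ - F z))) //.
    apply: cvg_trans fdrvbl; apply: cvg_app.
    move=> A [e egt0 Ae]; exists e => // x xe xgt0; apply: Ae => //.
    exact/ltr0_neq0.
  near=> h; apply: mulr_le0_ge0.
    by rewrite invr_le0; apply: ltW; near: h; exists 1 => /=.
  by rewrite subr_ge0 /=; apply: cmin.
rewrite /derive cvg_at_rightE //.
apply: limr_ge.
  rewrite -(cvg_at_rightE (fun h : R => h^-1 *: ((F \o shift z) _ - F z))) //.
  apply: cvg_trans fdrvbl; apply: cvg_app.
  move=> A [e egt0 Ae]; exists e => // x xe xgt0; apply: Ae => //.
  exact/lt0r_neq0.
near=> h; apply: mulr_ge0.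
  by rewrite invr_ge0; apply: ltW; near: h; exists 1 => /=.
by rewrite subr_ge0 /=; apply: cmin.
Unshelve. all: by end_near. Qed.

End Deriv.
Lemma solve_cj (V : zmodType) (g cj t s : V) : g + cj - t + s = 0 -> cj = - g - s + t.
Proof.
move=> h; apply/eqP; rewrite -subr_eq0 -h; apply/eqP.
by rewrite !opprD !opprK addrCA !addrA (addrAC g s cj) [RHS]addrAC.
Qed.

Lemma sum_if_eq (R : realType) (N p : nat) (F : nat -> R) :
  \sum_(i < N) (if (i : nat) == p then F (i : nat) else 0) = if (p < N)%N then F p else 0.
Proof.
elim: N => [|N IH]; first by rewrite big_ord0.
rewrite big_ord_recr /= IH [(p < N.+1)%N]ltnS [(p <= N)%N]leq_eqVlt.
case: (ltngtP p N) => h /=; rewrite ?orbT ?orbF.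
- by rewrite addr0.
- by rewrite addr0.
- by rewrite add0r h.
Qed.

Section FOC.
Variables (R : realType) (d n : nat) (f : nat -> 'cV[R]_d -> R)
  (gradf : nat -> 'cV[R]_d -> 'cV[R]_d)
  (phi : 'cV[R]_d -> 'cV[R]_d) (Jphi : 'cV[R]_d -> 'M[R]_d)
  (rho eta : nat -> R) (x lam : nat -> nat -> 'cV[R]_d).
Hypotheses (hfd : forall i, (i <= n)%N -> forall z, differentiable (f i) z)
 (hgr : forall i, (i <= n)%N -> forall z v, 'd (f i) z v = dotp (gradf i z) v)
 (hpd : forall z, differentiable phi z) (hJ : forall z v, 'd phi z v = Jphi z *m v)
 (heta : forall i, (i <= n)%N -> 0 < eta i)
 (hadmm : prox_admm n f phi rho eta x lam).
Local Notation V := 'cV[R]_d.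

Lemma gsE k m (y : V) i :
  gs_point x k m y i = if i == m then y else gs_point x k m 0 i.
Proof. by rewrite /gs_point; case: (ltnP i m) => h; [rewrite ltn_eqF | case: eqP]. Qed.

Lemma dG k m (z w : V) i :
  is_derive z w (fun y => gs_point x k m y i) (if i == m then w else 0).
Proof.
have [e|ne] := eqVneq i m.
  rewrite e.
  apply: (@is_derive_fun _ _ _ _ id _ _ _ _ (is_derive_id _ _)) => y.
  by rewrite gsE eqxx.
apply: (@is_derive_fun _ _ _ _ (cst (gs_point x k m 0 i)) _ _ _ _ (is_derive_cst _ _ _)) => y.
by rewrite gsE (negbTE ne).
Qed.

Lemma dcompG (W : normedModType R) (F : V -> W) k m (z w : V) i :
  (forall y, differentiable F y) ->
  is_derive z w (fun y => F (gs_point x k m y i)) (if i == m then 'd F z w else 0).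
Proof.
move=> dF.
have [e|ne] := eqVneq i m.
  rewrite e.
  apply: (@is_derive_fun _ _ _ _ F _ _ _ _ (@is_derive_diff _ _ _ F z w (dF z))) => y.
  by rewrite gsE eqxx.
apply: (@is_derive_fun _ _ _ _ (cst (F (gs_point x k m 0 i))) _ _ _ _ (is_derive_cst _ _ _)) => y.
by rewrite gsE (negbTE ne).
Qed.


Lemma dU k m (z w : V) i :
  is_derive z w (fun y => gs_point x k m y i.+1 - phi (gs_point x k m y i))
    ((if i.+1 == m then w else 0) - (if i == m then Jphi z *m w else 0)).
Proof.
apply: (@is_derive_fun _ _ _ _ ((fun y => gs_point x k m y i.+1) - (fun y => phi (gs_point x k m y i)))) => // .
apply: is_derive_eq; first exact: is_deriveB (dG _ _ _ _ _) (dcompG _ _ _ _ _ _ _ hpd).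
by rewrite hJ.
Qed.

Lemma dT k m (z w : V) i :
  let U := fun y => gs_point x k m y i.+1 - phi (gs_point x k m y i) in
  is_derive z w (fun y => dotp (lam k i) (U y) + rho i / 2 * enorm (U y) ^+ 2)
    (dotp (lam k i + rho i *: U z)
       ((if i.+1 == m then w else 0) - (if i == m then Jphi z *m w else 0))).
Proof.
move=> U.
apply: (@is_derive_fun _ _ _ _ ((fun y => dotp (cst (lam k i) y) (U y)) + (rho i / 2) \*: (fun y => dotp (U y) (U y)))).
  by move=> y; rewrite /= enorm_sq.
apply: is_derive_eq.
  apply: is_deriveD; first exact: is_derive_dotp (is_derive_cst _ _ _) (dU _ _ _ _ _).
  by apply: is_deriveZ; exact: is_derive_dotp (dU _ _ _ _ _) (dU _ _ _ _ _).
rewrite dotp0l addr0.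
have -> : gs_point x k m z i.+1 - phi (gs_point x k m z i) = U z by [].
rewrite (dotpC _ (U z)); move: (U z) => u; rewrite /cst dotpDl dotpZl.
by rewrite /GRing.scale /=; congr (_ + _); field.
Qed.


Lemma dPhi k m (z w : V) :
  is_derive z w (fun y => auglag n f phi rho (gs_point x k m y) (lam k)
                   + 1 / (2 * eta m) * enorm (y - x k m) ^+ 2)
   (\sum_(i < n.+1) (if (i : nat) == m then 'd (f i) z w else 0)
    + \sum_(i < n) dotp (lam k i + rho i *: (gs_point x k m z i.+1 - phi (gs_point x k m z i)))
         ((if i.+1 == m then w else 0) - (if (i : nat) == m then Jphi z *m w else 0))
    + 1 / (2 * eta m) *: (dotp (z - x k m) w + dotp w (z - x k m))).
Proof.
pose U i := fun y => gs_point x k m y i.+1 - phi (gs_point x k m y i).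
apply: (@is_derive_fun _ _ _ _
  ((\sum_(i < n.+1) (fun y => f i (gs_point x k m y i))
   + \sum_(i < n) (fun y => dotp (lam k i) (U i y) + rho i / 2 * enorm (U i y) ^+ 2))
   + (1 / (2 * eta m)) \*: (fun y => dotp (y - x k m) (y - x k m)))).
  by move=> y; rewrite /auglag /= !fct_sumE enorm_sq.
have dB : is_derive z w (fun y => y - x k m) w.
  apply: (@is_derive_fun _ _ _ _ (id - cst (x k m))) => //.
  rewrite -[X in is_derive _ _ _ X]subr0; exact: is_deriveB.
apply: is_deriveD; last by apply: is_deriveZ; exact: is_derive_dotp.
apply: is_deriveD.
  apply: is_derive_sum => i; apply: dcompG => y.
  by apply: hfd; rewrite -ltnS.
apply: is_derive_sum => i; exact: dT.
Qed.


Lemma alg_foc (g cj cm zb w : V) (J : 'M[R]_d) (e : R) (b : bool) : e != 0 ->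
  dotp (g + cj - (if b then J^T *m cm else 0) + e^-1 *: zb) w
  = dotp g w + (dotp cj w - (if b then dotp cm (J *m w) else 0))
    + (1 / (2 * e)) *: (dotp zb w + dotp w zb).
Proof.
move=> e0; rewrite !dotpDl dotpNl dotpZl (dotpC w zb) /GRing.scale /=.
by case: b; rewrite ?dotp0l ?dotp_trmx; field.
Qed.

Lemma foc k j : (j < n)%N ->
  lam k.+1 j = - gradf j.+1 (x k.+1 j.+1) - (eta j.+1)^-1 *: (x k.+1 j.+1 - x k j.+1)
    + (if (j.+1 < n)%N then (Jphi (x k.+1 j.+1))^T *m
         (lam k j.+1 + rho j.+1 *: (x k j.+2 - phi (x k.+1 j.+1))) else 0).
Proof.
move=> hj; have hm : (j.+1 <= n)%N by [].
have [hmin hupd] := hadmm k.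
have g1 : gs_point x k j.+1 (x k.+1 j.+1) j.+1 = x k.+1 j.+1 by rewrite /gs_point ltnn eqxx.
have g2 : gs_point x k j.+1 (x k.+1 j.+1) j = x k.+1 j by rewrite /gs_point ltnSn.
have g3 : gs_point x k j.+1 (x k.+1 j.+1) j.+2 = x k j.+2.
  by rewrite /gs_point ltnNge leqnSn /= gtn_eqF.
set m := j.+1 in hm g1 g2 g3 *.
set z := x k.+1 m in g1 g2 g3 *. set b := x k m.
set c := fun i => lam k i + rho i *: (gs_point x k m z i.+1 - phi (gs_point x k m z i)).
set J := Jphi z.
set Vv := gradf m z + c j - (if (m < n)%N then J^T *m c m else 0) + (eta m)^-1 *: (z - b).
have em : eta m != 0 by rewrite gt_eqF // heta.
have H := @fermat R d (fun y => auglag n f phi rho (gs_point x k m y) (lam k)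
   + 1 / (2 * eta m) * enorm (y - x k m) ^+ 2) z Vv _ (hmin m hm) (dPhi k m z Vv).
rewrite (sum_if_eq _ _ _ (fun i => 'd (f i) z Vv)) ltnS hm hgr //= in H.
rewrite (eq_bigr (fun i : 'I_n => (if (i : nat) == j then dotp (c i) Vv else 0)
       - (if (i : nat) == m then dotp (c i) (J *m Vv) else 0))) in H; last first.
  move=> i _; rewrite dotpBr eqSS.
  by case: eqP => _; case: eqP => _; rewrite ?dotp0r.
rewrite sumrB (sum_if_eq _ _ _ (fun i => dotp (c i) Vv)) (sum_if_eq _ _ _ (fun i => dotp (c i) (J *m Vv))) hj in H.
have H2 : dotp Vv Vv = 0 by rewrite -H alg_foc.
have V0 := dotp_eq0 _ H2.
have -> : lam k.+1 j = c j by rewrite (hupd j hj) /c g1 g2.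
have cm : c m = lam k m + rho m *: (x k m.+1 - phi z) by rewrite /c g1 g3.
rewrite -cm -/J.
exact: solve_cj V0.
Qed.

End FOC.
Section Recur.
Context {R : realType}.

Lemma gsum_shift (M : R) a b : M * gsum M a b = gsum M a.+1 b.+1.
Proof.
rewrite /gsum big_add1 /= mulr_sumr; apply: eq_bigr => l _; by rewrite exprS.
Qed.

Lemma gsum0S (M : R) p : gsum M 0 p.+1 = 1 + M * gsum M 0 p.
Proof.
rewrite /gsum big_nat_recl // expr0 mulr_sumr; congr (_ + _).
by apply: eq_bigr => l _; rewrite exprS.
Qed.

Lemma gsum_ge0 (M : R) a b : 0 <= M -> 0 <= gsum M a b.
Proof. by move=> M0; apply: sumr_ge0 => l _; apply: exprn_ge0. Qed.

Lemma down_ind (n : nat) (P : nat -> Prop) :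
  (forall j, (j < n)%N -> ((j.+1 < n)%N -> P j.+1) -> P j) ->
  forall j, (j < n)%N -> P j.
Proof.
move=> H; suff : forall t j, (n - j)%N = t.+1 -> P j.
  by move=> h j hj; apply: (h (n - j).-1); rewrite prednK // subn_gt0.
elim=> [|t IH] j e; apply: H => [|hj]; try lia.
by apply: IH; lia.
Qed.

Lemma Ct_step (Mp : R) rho eta m j : (j < m)%N ->
  Ctji Mp rho eta m j = Mp * Ctji Mp rho eta m j.+1 + (if m == j.+1 then Mp * rho m else 0).
Proof.
move=> jm; rewrite /Ctji (gtn_eqF jm).
have [e|ne] := eqVneq m j.+1.
  by rewrite e ?eqxx subSnn expr1; ring.
rewrite -(subnSK jm) exprS addr0; ring.
Qed.

Lemma C_step n (Mf Lf Mp Lp : R) rho eta m j : (j < m)%N -> (j.+1 < n)%N ->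
  Cji n Mf Lf Mp Lp rho eta m j
  = 2 * Mp * Ctji Mp rho eta m j.+1 + Mp * Cji n Mf Lf Mp Lp rho eta m j.+1
    + (if m == j.+1 then Mp * rho m else 0).
Proof.
move=> jm jn; rewrite /Cji /Ctji (gtn_eqF jm).
have e1 : (n - j - 1 = (n - j.+1 - 1).+1)%N by lia.
have [e|ne] := eqVneq m j.+1.
  rewrite e ?eqxx subSnn e1 -gsum_shift expr1.
  by rewrite (_ : (2 * 1 + 1)%:R = 3 :> R) // (_ : (2 * 1 - 1)%:R = 1 :> R) //; ring.
rewrite addr0.
have [q eq] : exists q, m = (j + q.+2)%N by exists (m - j.+2)%N; lia.
have e2 : (m - j = q.+2)%N by lia.
have e3 : (m - j.+1 = q.+1)%N by lia.
rewrite e2 e3 e1 -gsum_shift.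
rewrite (_ : (2 * q.+2 + 1)%:R = (2 * q.+1 + 1)%:R + 2 :> R); last first.
  by rewrite -natrD; congr _%:R; lia.
rewrite (_ : (2 * q.+2 - 1)%:R = (2 * q.+1 - 1)%:R + 2 :> R); last first.
  by rewrite -natrD; congr _%:R; lia.
rewrite !exprS; ring.
Qed.

End Recur.
Lemma sum_if_first {R : realType} (a b : nat) (X : nat -> R) : (a < b)%N ->
  \sum_(a <= m < b) (if m == a then X m else 0) = X a.
Proof.
move=> ab; rewrite big_ltn // eqxx big_nat_cond big1 ?addr0 //.
by move=> m /andP[/andP[hm _] _]; rewrite gtn_eqF.
Qed.

Section Rec2.
Context {R : realType}.
Variables (n : nat) (Mf Lf Mp Lp : R) (rho eta : nat -> R) (Lam Del D E N : nat -> R).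
Hypotheses (hMf : 0 <= Mf) (hLp : 0 <= Lp) (hMp : 0 <= Mp)
  (hrho : forall j, (j < n)%N -> 0 < rho j) (heta : forall i, (i <= n)%N -> 0 < eta i)
  (hD : forall i, 0 <= D i) (hE : forall i, 0 <= E i)
  (hN0 : forall j, 0 <= N j) (hNL : forall j, (j.+1 < n)%N -> N j <= Lp * D j.+1)
  (hNM : forall j, (j.+1 < n)%N -> N j <= 2 * Mp).
Hypothesis B1 : forall j, (j < n)%N ->
  Lam j <= Mf + D j.+1 / eta j.+1
           + (if (j.+1 < n)%N then Mp * (Lam j.+1 + rho j.+1 * D j.+2) else 0).
Hypothesis B2 : forall j, (j < n)%N ->
  Del j <= (Lf + 1 / eta j.+1) * D j.+1 + E j.+1 / eta j.+1
           + (if (j.+1 < n)%N then N j * Lam j.+1 + Mp * Del j.+1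
                + Mp * rho j.+1 * (D j.+2 + E j.+2) else 0).

Let S1 j := \sum_(j <= m < n) Ctji Mp rho eta m j * D m.+1.
Let S2 j := \sum_(j <= m < n) (Cji n Mf Lf Mp Lp rho eta m j * D m.+1
                                + Ctji Mp rho eta m j * E m.+1).

Lemma Ct_ge0 m j : (m < n)%N -> 0 <= Ctji Mp rho eta m j.
Proof.
move=> mn; have e1 := heta m.+1 mn; have r1 := hrho m mn.
have x1 := exprn_ge0 (m - j) hMp.
rewrite /Ctji; case: eqP => [e|_].
  by rewrite -e div1r invr_ge0; apply: ltW.
have e2 : 0 <= (eta m.+1)^-1 by rewrite invr_ge0; apply: ltW.
by rewrite addr_ge0 ?mulr_ge0 //; apply: ltW.
Qed.

Lemma S1_ge0 j : 0 <= S1 j.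
Proof.
rewrite /S1 big_nat_cond; apply: sumr_ge0 => m /andP[/andP[_ hm] _].
by rewrite mulr_ge0 ?Ct_ge0.
Qed.

Lemma S1_step j : (j.+1 < n)%N ->
  S1 j = D j.+1 / eta j.+1 + Mp * S1 j.+1 + Mp * rho j.+1 * D j.+2.
Proof.
move=> hj; rewrite /S1 big_ltn ?(ltn_trans (ltnSn j) hj) //.
rewrite {1}/Ctji eqxx.
rewrite (eq_big_nat _ _ (F2 := fun m => Mp * (Ctji Mp rho eta m j.+1 * D m.+1)
     + (if m == j.+1 then Mp * rho m * D m.+1 else 0))); last first.
  move=> m /andP[hm _]; rewrite Ct_step //.
  by case: eqP => _; rewrite ?mulr0 ?addr0 ?mul0r; ring.
by rewrite big_split /= sum_if_first // -mulr_sumr; ring.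
Qed.

Lemma S2_step j : (j.+1 < n)%N ->
  S2 j = (gsum Mp 0 (n - j - 1) * Mf * Lp + Lf + 1 / eta j.+1) * D j.+1
         + E j.+1 / eta j.+1 + 2 * Mp * S1 j.+1 + Mp * S2 j.+1
         + Mp * rho j.+1 * (D j.+2 + E j.+2).
Proof.
move=> hj; rewrite /S2 big_ltn ?(ltn_trans (ltnSn j) hj) //.
rewrite {1}/Cji {1}/Ctji !eqxx.
rewrite (eq_big_nat _ _ (F2 := fun m => 2 * Mp * (Ctji Mp rho eta m j.+1 * D m.+1)
     + Mp * (Cji n Mf Lf Mp Lp rho eta m j.+1 * D m.+1 + Ctji Mp rho eta m j.+1 * E m.+1)
     + (if m == j.+1 then Mp * rho m * (D m.+1 + E m.+1) else 0))); last first.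
  move=> m /andP[hm _]; rewrite (Ct_step Mp rho eta m j hm) C_step //.
  move: (Ctji Mp rho eta m j.+1) (Cji n Mf Lf Mp Lp rho eta m j.+1) (D m.+1) (E m.+1).
  move=> a b u v; case: eqP => _.
    by ring.
  by rewrite ?addr0; ring.
rewrite !big_split /= sum_if_first // -!mulr_sumr /S1 !big_split /=.
ring.
Qed.

Lemma R1 j : (j < n)%N -> Lam j <= Mf * gsum Mp 0 (n - j) + S1 j.
Proof.
move: j; apply: down_ind => j hj IH.
have := B1 j hj; case: (ltnP j.+1 n) => hj1 h.
  have := IH hj1; rewrite (S1_step j hj1) (_ : (n - j = (n - j.+1).+1)%N) ?gsum0S; last by lia.
  move=> h2; have p := ler_wpM2l hMp h2; move: h => /= h; lra.
have e : n = j.+1 by apply/eqP; rewrite eqn_leq hj1 hj.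
rewrite /S1 big_ltn // big_geq; last by rewrite e.
rewrite e subSnn /gsum big_nat1 expr0 /Ctji eqxx; lra.
Qed.

Lemma R2 j : (j < n)%N -> Del j <= S2 j.
Proof.
move: j; apply: down_ind => j hj IH.
have := B2 j hj; case: (ltnP j.+1 n) => hj1 /= h.
  have h2 := IH hj1; have h1 := R1 j.+1 hj1; rewrite (S2_step j hj1).
  have e : (n - j - 1 = n - j.+1)%N by lia.
  rewrite e; set G := gsum Mp 0 (n - j.+1).
  have G0 : 0 <= G by apply: gsum_ge0.
  have s0 := S1_ge0 j.+1.
  have hN := hN0 j; have hNl := hNL j hj1; have hNm := hNM j hj1.
  have p1 : N j * Lam j.+1 <= N j * (Mf * G + S1 j.+1) by rewrite ler_wpM2l.
  have p2 : N j * (Mf * G) <= Lp * D j.+1 * (Mf * G) by rewrite ler_wpM2r ?mulr_ge0.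
  have p3 : N j * S1 j.+1 <= 2 * Mp * S1 j.+1 by rewrite ler_wpM2r.
  have p4 : Mp * Del j.+1 <= Mp * S2 j.+1 by rewrite ler_wpM2l.
  lra.
have e : n = j.+1 by apply/eqP; rewrite eqn_leq hj1 hj.
rewrite /S2 big_ltn // big_geq; last by rewrite e.
rewrite e /Cji /Ctji eqxx subSnn subnn /gsum big_geq //; lra.
Qed.

End Rec2.
Section Sq.
Context {R : realType}.

Lemma sum_sq_le (i n : nat) (p : nat -> R) :
  (\sum_(i <= m < n) p m) ^+ 2 <= (n - i)%:R * \sum_(i <= m < n) p m ^+ 2.
Proof.
set Q := \sum_(i <= m < n) p m ^+ 2.
rewrite expr2 mulr_suml.
have -> : (n - i)%:R * Q
  = \sum_(i <= m < n) \sum_(i <= l < n) ((p m ^+ 2 + p l ^+ 2) / 2).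
  have E1 : forall m, \sum_(i <= l < n) ((p m ^+ 2 + p l ^+ 2) / 2)
      = ((n - i)%:R * p m ^+ 2 + Q) / 2.
    by move=> m; rewrite -mulr_suml big_split /= sumr_const_nat mulr_natl.
  rewrite (eq_bigr _ (fun m _ => E1 m)) -mulr_suml big_split /= sumr_const_nat.
  by rewrite -mulr_sumr -/Q mulr_natl; field.
apply: ler_sum => m _; rewrite mulr_sumr; apply: ler_sum => l _.
have := sqr_ge0 (p m - p l); lra.
Qed.

Lemma final_sq (i n : nat) (c ct u v : nat -> R) (Dl : R) : 0 <= Dl ->
  Dl <= \sum_(i <= m < n) (c m * u m + ct m * v m) ->
  Dl ^+ 2 <= \sum_(i <= m < n) (2 * (n - i))%:R * c m ^+ 2 * u m ^+ 2
           + \sum_(i <= m < n) (2 * (n - i))%:R * ct m ^+ 2 * v m ^+ 2.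
Proof.
move=> D0 hD.
have h1 : Dl ^+ 2 <= (\sum_(i <= m < n) (c m * u m + ct m * v m)) ^+ 2.
  by rewrite ler_pXn2r // nnegrE (le_trans D0 hD).
apply: (le_trans h1); rewrite big_split /=.
set P := \sum_(i <= m < n) c m * u m; set Q := \sum_(i <= m < n) ct m * v m.
have hP := sum_sq_le i n (fun m => c m * u m).
have hQ := sum_sq_le i n (fun m => ct m * v m).
have -> : \sum_(i <= m < n) (2 * (n - i))%:R * c m ^+ 2 * u m ^+ 2
   = 2 * ((n - i)%:R * \sum_(i <= m < n) (c m * u m) ^+ 2).
  rewrite !mulr_sumr; apply: eq_bigr => m _; rewrite natrM exprMn; ring.
have -> : \sum_(i <= m < n) (2 * (n - i))%:R * ct m ^+ 2 * v m ^+ 2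
   = 2 * ((n - i)%:R * \sum_(i <= m < n) (ct m * v m) ^+ 2).
  rewrite !mulr_sumr; apply: eq_bigr => m _; rewrite natrM exprMn; ring.
rewrite /= -/P -/Q in hP hQ.
have e : (P + Q) ^+ 2 = 2 * P ^+ 2 + 2 * Q ^+ 2 - (P - Q) ^+ 2 by ring.
have := sqr_ge0 (P - Q); rewrite e; lra.
Qed.

End Sq.
Section Gen.
Context {R : realType} {d : nat}.
Local Notation V := 'cV[R]_d.
Local Notation M := 'M[R]_d.

Lemma vid1 (L a b p : V) (r : R) : L + r *: (b - p) = (L + r *: (a - p)) - r *: (a - b).
Proof. by apply/matrixP => i j; rewrite !mxE; ring. Qed.

Lemma B1_gen (g u L dv : V) (J : M) (e r Mf Mp : R) (bb : bool) :
  0 < e -> 0 <= r -> enorm g <= Mf -> (bb -> mnorm J <= Mp) ->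
  enorm (- g - e^-1 *: u + (if bb then J^T *m (L - r *: dv) else 0))
  <= Mf + enorm u / e + (if bb then Mp * (enorm L + r * enorm dv) else 0).
Proof.
move=> e0 r0 hg hJ.
apply: (le_trans (enormD _ _)); apply: lerD.
  apply: (le_trans (enormD _ _)); rewrite enormN -scaleNr enormZ normrN.
  have ie : 0 <= e^-1 by rewrite invr_ge0; apply: ltW.
  rewrite (ger0_norm ie) [enorm u / e]mulrC; lra.
case: bb hJ => [hJ|_]; last by rewrite /= enorm0.
apply: (le_trans (mnorm_boundT _ _)).
have hL : enorm (L - r *: dv) <= enorm L + r * enorm dv.
  by rewrite (le_trans (enormDB _ _)) // enormZ ger0_norm.
apply: (le_trans (ler_wpM2l (mnorm_ge0 _) hL)).
by rewrite ler_wpM2r ?addr_ge0 ?mulr_ge0 ?enorm_ge0 // hJ.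
Qed.

Lemma B2_gen (ga gb u v L1 L0 Dv Ev : V) (Ja Jb : M) (e r Lf Mp Du N : R) (bb : bool) :
  0 < e -> 0 <= r -> enorm (ga - gb) <= Lf * Du -> enorm u = Du ->
  (bb -> mnorm Ja <= Mp) -> (bb -> mnorm Jb <= Mp) -> mnorm (Ja - Jb) = N ->
  enorm ((- ga - e^-1 *: u + (if bb then Ja^T *m (L1 - r *: Dv) else 0))
         - (- gb - e^-1 *: v + (if bb then Jb^T *m (L0 - r *: Ev) else 0)))
  <= (Lf + 1 / e) * Du + enorm v / e
     + (if bb then N * enorm L1 + Mp * enorm (L1 - L0) + Mp * r * (enorm Dv + enorm Ev)
        else 0).
Proof.
move=> e0 r0 hg hu hJa hJb hN.
have ei : `|e^-1| = e^-1 by rewrite ger0_norm // invr_ge0 ltW.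
have id : (- ga - e^-1 *: u + (if bb then Ja^T *m (L1 - r *: Dv) else 0))
         - (- gb - e^-1 *: v + (if bb then Jb^T *m (L0 - r *: Ev) else 0))
  = (- (ga - gb) - e^-1 *: u + e^-1 *: v)
    + (if bb then ((Ja - Jb)^T *m L1 + Jb^T *m (L1 - L0))
                  - (r *: (Ja^T *m Dv) - r *: (Jb^T *m Ev)) else 0).
  case: bb {hJa hJb}.
    have tB : (Ja - Jb)^T = Ja^T - Jb^T by apply/matrixP => i j; rewrite !mxE.
    rewrite tB !mulmxBr mulmxBl -!scalemxAr.
    move: (Ja^T *m L1) (Jb^T *m L1) (Jb^T *m L0) (Ja^T *m Dv) (Jb^T *m Ev) => A1 B1 B0 C1 C2.
    by apply/matrixP => i j; rewrite !mxE; ring.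
  by apply/matrixP => i j; rewrite !mxE; ring.
rewrite id {id}; apply: (le_trans (enormD _ _)).
have h1 : enorm (- (ga - gb) - e^-1 *: u + e^-1 *: v) <= (Lf + 1 / e) * Du + enorm v / e.
  apply: (le_trans (enormD _ _)); rewrite enormZ ei.
  apply: (le_trans (lerD (enormD _ _) (lexx _))); rewrite enormN -scaleNr enormZ normrN ei hu.
  have := hg; rewrite mulrDl div1r [enorm v / e]mulrC; lra.
case: bb hJa hJb => [hJa hJb|_ _]; last by rewrite enorm0 !addr0.
have hJa' := hJa isT; have hJb' := hJb isT.
apply: lerD => //.
apply: (le_trans (enormDB _ _)); apply: lerD.
  apply: (le_trans (enormD _ _)); apply: lerD.
    by rewrite -hN mnorm_boundT.
  apply: (le_trans (mnorm_boundT _ _)).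
  by rewrite ler_wpM2r ?enorm_ge0.
apply: (le_trans (enormDB _ _)); rewrite !enormZ ger0_norm //.
have h3 := mnorm_boundT Ja Dv; have h4 := mnorm_boundT Jb Ev.
have h5 : mnorm Ja * enorm Dv <= Mp * enorm Dv by rewrite ler_wpM2r ?enorm_ge0.
have h6 : mnorm Jb * enorm Ev <= Mp * enorm Ev by rewrite ler_wpM2r ?enorm_ge0.
have := enorm_ge0 (Ja^T *m Dv); have := enorm_ge0 (Jb^T *m Ev).
nra.
Qed.

End Gen.
Lemma col_pack {R : realType} {d : nat} (n : nat) (y : nat -> 'cV[R]_d) m :
  (m <= n)%N -> col (inord m) (pack n y) = y m.
Proof.
by move=> hm; apply/matrixP => p q; rewrite !mxE (ord1 q) inordK.
Qed.

Theorem lemma2 (R : realType) (n d : nat) (hn : (1 <= n)%N) (hd : (1 <= d)%N)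
  (f : nat -> 'cV[R]_d -> R) (gradf : nat -> 'cV[R]_d -> 'cV[R]_d)
  (phi : 'cV[R]_d -> 'cV[R]_d) (Jphi : 'cV[R]_d -> 'M[R]_d)
  (rho eta : nat -> R) (x lam : nat -> nat -> 'cV[R]_d)
  (S : set 'M[R]_(d, n.+1)) (Mf Lf Cphi Mphi Lphi : R) (k : nat) :
  (* f_0, ..., f_n are continuously differentiable with gradients gradf i *)
  (forall i, (i <= n)%N -> forall z, differentiable (f i) z) ->
  (forall i, (i <= n)%N -> forall z v, 'd (f i) z v = dotp (gradf i z) v) ->
  (forall i, (i <= n)%N -> continuous (gradf i)) ->
  (* phi is continuously differentiable with Jacobian matrix Jphi *)
  (forall z, differentiable phi z) ->
  (forall z v, 'd phi z v = Jphi z *m v) ->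
  continuous Jphi ->
  (forall i, (i < n)%N -> 0 < rho i) ->
  (forall i, (i <= n)%N -> 0 < eta i) ->
  prox_admm n f phi rho eta x lam ->
  compact S ->
  A2 S gradf phi Jphi Mf Lf Cphi Mphi Lphi ->
  (1 <= k)%N ->
  S (pack n (x k)) -> S (pack n (x k.+1)) ->
  forall i, (i < n)%N ->
    enorm (lam k.+1 i - lam k i) ^+ 2 <=
      \sum_(i <= j < n)
         (2 * (n - i))%:R * Cji n Mf Lf Mphi Lphi rho eta j i ^+ 2
           * enorm (x k.+1 j.+1 - x k j.+1) ^+ 2
    + \sum_(i <= j < n)
         (2 * (n - i))%:R * Ctji Mphi rho eta j i ^+ 2
           * enorm (x k j.+1 - x k.-1 j.+1) ^+ 2.
Proof.
move=> hfd hgr _ hpd hJ _ hrho heta hadmm _ hA2 hk Sb Sa i hi.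
case: k hk Sb Sa => [//|k] _ Sb Sa.
have [[Mf0 Lf0 _ Mp0 Lp0] hA] := hA2.
have F := @foc R d n f gradf phi Jphi rho eta x lam hfd hgr hpd hJ heta hadmm.
have A2m : forall m, (m <= n)%N ->
  [/\ enorm (gradf m (x k.+2 m)) <= Mf,
      enorm (gradf m (x k.+2 m) - gradf m (x k.+1 m)) <= Lf * enorm (x k.+2 m - x k.+1 m),
      mnorm (Jphi (x k.+2 m)) <= Mphi, mnorm (Jphi (x k.+1 m)) <= Mphi &
      mnorm (Jphi (x k.+2 m) - Jphi (x k.+1 m)) <= Lphi * enorm (x k.+2 m - x k.+1 m)].
  move=> m hm.
  have [h1 h2 _ h4 h5] := hA _ _ Sa Sb (inord m).
  have [_ _ _ h4' _] := hA _ _ Sb Sa (inord m).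
  by rewrite !col_pack // inordK ?ltnS // in h1 h2 h4 h5 h4'.
pose Lam j := enorm (lam k.+2 j).
pose Del j := enorm (lam k.+2 j - lam k.+1 j).
pose D j := enorm (x k.+2 j - x k.+1 j).
pose E j := enorm (x k.+1 j - x k j).
pose N j := mnorm (Jphi (x k.+2 j.+1) - Jphi (x k.+1 j.+1)).
have B1 : forall j, (j < n)%N ->
  Lam j <= Mf + D j.+1 / eta j.+1
           + (if (j.+1 < n)%N then Mphi * (Lam j.+1 + rho j.+1 * D j.+2) else 0).
  move=> j hj; rewrite /Lam (F k.+1 j hj).
  have [h1 _ h3 _ _] := A2m j.+1 hj.
  case: ifP => hj1; last first.
    by apply: (B1_gen _ _ 0 0 0 _ 0 _ 0 false) => //; exact: heta.
  rewrite (vid1 (lam k.+1 j.+1) (x k.+2 j.+2) (x k.+1 j.+2) (phi (x k.+2 j.+1)) (rho j.+1)).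
  rewrite -((hadmm k.+1).2 j.+1 hj1).
  apply: (B1_gen _ _ _ _ _ _ _ _ _ true) => //; [exact: heta | exact: ltW (hrho _ hj1)].
have B2 : forall j, (j < n)%N ->
  Del j <= (Lf + 1 / eta j.+1) * D j.+1 + E j.+1 / eta j.+1
           + (if (j.+1 < n)%N then N j * Lam j.+1 + Mphi * Del j.+1
                + Mphi * rho j.+1 * (D j.+2 + E j.+2) else 0).
  move=> j hj; rewrite /Del (F k.+1 j hj) (F k j hj).
  have [_ h2 h3 h4 _] := A2m j.+1 hj.
  case: ifP => hj1.
    rewrite (vid1 _ (x k.+2 j.+2)) -((hadmm k.+1).2 j.+1 hj1).
    rewrite (vid1 (lam k j.+1) (x k.+1 j.+2)) -((hadmm k).2 j.+1 hj1).
    apply: (B2_gen _ _ _ _ _ _ _ _ _ _ _ _ _ _ _ _ true) => //; [exact: heta | exact: ltW (hrho _ hj1)].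
  by apply: (B2_gen _ _ _ _ 0 0 0 0 0 0 _ 0 _ 0 _ (mnorm (0 - 0)) false) => //; exact: heta.
have hNL : forall j, (j.+1 < n)%N -> N j <= Lphi * D j.+1.
  by move=> j hj; have [_ _ _ _ h5] := A2m j.+1 (ltnW hj).
have hNM : forall j, (j.+1 < n)%N -> N j <= 2 * Mphi.
  move=> j hj; have [_ _ h3 h4 _] := A2m j.+1 (ltnW hj).
  by apply: (le_trans (mnormB _ _)); lra.
have H := R2 n Mf Lf Mphi Lphi rho eta Lam Del D E N (ltW Mf0) (ltW Lp0) (ltW Mp0)
  hrho heta (fun i => enorm_ge0 _) (fun j => mnorm_ge0 _) hNL hNM B1 B2 i hi.
exact: (final_sq i n (fun m => Cji n Mf Lf Mphi Lphi rho eta m i)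
   (fun m => Ctji Mphi rho eta m i) (fun m => D m.+1) (fun m => E m.+1) (Del i)
   (enorm_ge0 _) H).
Qed.
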